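(* Let $K$ and $L$ be compact (Hausdorff) spaces. If $L$ contains a subspace homeomorphic to the Cantor space $2^\omega$ and there exists a continuous linear surjection $T\colon\mathcal C_p(K)\to\mathcal C_p(L)$, then $K$ also contains a subspace homeomorphic to $2^\omega$.
   Context: For a compact space $K$, $\mathcal C_p(K)$ denotes the vector space of continuous real-valued functions on $K$ endowed with the topology of pointwise convergence. *)

(* Defs.v *)
From HB Require Import structures.
From mathcomp Require Import all_boot all_order all_algebra.
From mathcomp Require Import all_classical all_reals all_analysis.
Set Implicit Arguments. Unset Strict Implicit. Unset Printing Implicit Defensive.
Import Order.TTheory GRing.Theory Num.Theory.
Import numFieldNormedType.Exports.
Local Open Scope classical_set_scope.
Local Open Scope ring_scope.

Definition homeomorphic_subspace (X Y : topologicalType) (A : set Y) : Prop :=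
  exists (f : X -> Y) (g : Y -> X),
    [/\ (forall x, A (f x)),
        (forall x, g (f x) = x),
        (forall y, A y -> f (g y) = y),
        continuous f &
        {within A, continuous g}].

Definition contains_cantor (Y : topologicalType) : Prop :=
  exists A : set Y, homeomorphic_subspace cantor_space A.

(** We represent maps C_p(K) -> C_p(L) by functions (K -> R) -> (L -> R)
    and only use their values on continuous functions. [T] is a continuous
    linear surjection C_p(K) -> C_p(L) when: it maps C(K) into C(L), it is
    linear on C(K), it is continuous on C(K) for the pointwise (product)
    topologies, and every continuous function on L is the image of a
    continuous function on K. *)
Definition Cp_cont_linear_surj (R : realType) (K L : topologicalType)
    (T : (K -> R) -> (L -> R)) : Prop :=
  [/\ (forall f : K -> R, continuous f -> continuous (T f)),
      (forall (a : R) (f g : K -> R), continuous f -> continuous g ->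
         T (fun x => a * f x + g x) = (fun y => a * T f y + T g y)),
      {within [set f : {ptws K -> R} | continuous (f : K -> R)],
         continuous ((fun f : {ptws K -> R} => (T f : {ptws L -> R})))} &
      (forall h : L -> R, continuous h ->
         exists f : K -> R, continuous f /\ T f = h)].

(* Main.v *)
Require Import Defs.
From HB Require Import structures.
From mathcomp Require Import all_boot all_order all_algebra.
From mathcomp Require Import all_classical all_reals all_analysis.
Set Implicit Arguments. Unset Strict Implicit. Unset Printing Implicit Defensive.
Import Order.TTheory GRing.Theory Num.Theory.
Import numFieldNormedType.Exports.
Local Open Scope classical_set_scope.
Local Open Scope ring_scope.

Lemma prod_nbhs_fin (I : choiceType) (V : topologicalType) (z : I -> V) (U : set (I -> V)) :
  nbhs (z : prod_topology (fun _ : I => V)) U ->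
  exists s : seq I, forall g : I -> V, (forall i, i \in s -> g i = z i) -> U g.
Proof.
pose F := filter_from [set: seq I] (fun s => [set g : I -> V | forall i, i \in s -> g i = z i]).
have FF : Filter F.
  apply: filter_from_filter; first by exists [::].
  move=> s1 s2 _ _; exists (s1 ++ s2) => // g Hg; split => i Hi; apply: Hg;
  by rewrite mem_cat Hi ?orbT.
have Fz : F --> (z : prod_topology (fun _ : I => V)).
  apply/cvg_sup => i. apply/cvg_image.
    rewrite eqEsubset; split => // v _; exists (dfwith z i v) => //.
  move=> B /= nB; exists [set g : I -> V | B (g i)].
    exists [:: i] => // g /(_ i); rewrite mem_seq1 eqxx => /(_ isT) /= ->.
    exact: nbhs_singleton.
  rewrite eqEsubset; split => [_ [g /= Bg <-] //|v Bv].
  by exists (dfwith z i v); rewrite /= dfwithin.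
move=> nU; have [s _ sU] := Fz _ nU; exists s => g Hg; exact: sU.
Qed.
Section CantorTools.

Definition cyl (y : cantor_space) (m : nat) : set cantor_space :=
  [set z | forall i, (i < m)%N -> z i = y i].

Lemma cyl_refl y m : cyl y m y.
Proof. by []. Qed.

Lemma cyl_mono y m m' : (m <= m')%N -> cyl y m' `<=` cyl y m.
Proof. by move=> mm' z Hz i im; apply: Hz; apply: leq_trans mm'. Qed.

Lemma cyl_trans y z m m' : (m <= m')%N -> cyl y m z -> cyl z m' `<=` cyl y m.
Proof. by move=> mm' yz w Hw i im; rewrite Hw ?yz //; apply: leq_trans mm'. Qed.

Lemma cyl_sym y z m : cyl y m z -> cyl z m y.
Proof. by move=> H i im; rewrite H. Qed.

Lemma cyl_eq y z m : cyl y m z -> cyl z m = cyl y m.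
Proof.
move=> yz; rewrite eqEsubset; split; first exact: cyl_trans.
by apply: cyl_trans => //; apply: cyl_sym.
Qed.

Lemma nbhs_cyl (y : cantor_space) (U : set cantor_space) :
  nbhs y U -> exists m, cyl y m `<=` U.
Proof.
move=> /prod_nbhs_fin [s Hs]; exists (\max_(i <- s) i.+1)%N => z Hz.
apply: Hs => i is_; apply: Hz.
exact: (@leq_bigmax_seq _ s xpredT succn i is_ isT).
Qed.

Lemma cyl1_nbhs (y : cantor_space) i : nbhs y [set z : cantor_space | z i = y i].
Proof.
have : open (proj i @^-1` [set y i] : set cantor_space).
  by apply: open_comp; [move=> + _; exact: proj_continuous | apply: discrete_open].
move=> op; apply: open_nbhs_nbhs; split => //.
Qed.

Lemma cyl_nbhs y m : nbhs y (cyl y m).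
Proof.
elim: m => [|m IH].
  have -> : cyl y 0 = setT by rewrite eqEsubset; split => // z _ i.
  exact: filterT.
apply: filterS (filterI IH (cyl1_nbhs y m)) => z [H1 H2] i.
by rewrite ltnS leq_eqVlt => /predU1P[->//|/H1].
Qed.

Lemma cyl_open y m : open (cyl y m).
Proof.
rewrite openE => z Hz; rewrite /interior -(cyl_eq Hz); exact: cyl_nbhs.
Qed.

Lemma continuous_cyl (X : topologicalType) (F : cantor_space -> X) :
  (forall s (U : set X), open U -> U (F s) -> exists m, forall t, cyl s m t -> U (F t)) ->
  continuous F.
Proof.
move=> H s W /= nW; rewrite nbhs_simpl.
have [U [[oU Us] UW]] : exists U, open_nbhs (F s) U /\ U `<=` W.
  by move: nW; rewrite nbhsE => -[U ? ?]; exists U.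
have [m Hm] := H s U oU Us; apply: filterS (cyl_nbhs s m) => t /Hm; exact: UW.
Qed.

Definition climit (Q : nat -> cantor_space * nat) : cantor_space :=
  fun i => (Q i.+1).1 i.

Section Nested.
Variable Q : nat -> cantor_space * nat.
Hypothesis Qin : forall k, cyl (Q k).1 (Q k).2 (Q k.+1).1.
Hypothesis Qlt : forall k, ((Q k).2 < (Q k.+1).2)%N.

Lemma Q_mono k k' : (k <= k')%N -> ((Q k).2 <= (Q k').2)%N.
Proof.
elim: k' => [|k' IH]; first by rewrite leqn0 => /eqP->.
rewrite leq_eqVlt => /predU1P[->//|]; rewrite ltnS => /IH H.
by apply: leq_trans H (ltnW (Qlt _)).
Qed.

Lemma Q_ge k : (k <= (Q k).2)%N.
Proof. elim: k => // k IH; apply: leq_ltn_trans IH (Qlt _). Qed.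

Lemma Q_nested k k' : (k <= k')%N -> cyl (Q k').1 (Q k').2 `<=` cyl (Q k).1 (Q k).2.
Proof.
elim: k' => [|k' IH]; first by rewrite leqn0 => /eqP->.
rewrite leq_eqVlt => /predU1P[->//|]; rewrite ltnS => /IH H.
apply: subset_trans H; apply: cyl_trans; [exact: ltnW (Qlt _)| exact: Qin].
Qed.

Lemma climit_in k : cyl (Q k).1 (Q k).2 (climit Q).
Proof.
move=> i ilt; rewrite /climit.
case: (leqP i.+1 k) => ik.
  have := Q_nested ik (@cyl_refl (Q k).1 (Q k).2); move/(_ i) => -> //.
  exact: leq_trans (ltnSn i) (Q_ge _).
by have := Q_nested (ltnW ik) (@cyl_refl (Q i.+1).1 (Q i.+1).2); move/(_ i) => ->.
Qed.

End Nested.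

Lemma baire_cyl (S : nat -> set cantor_space) :
  (forall y, exists n, S n y) ->
  (forall n y, ~ S n y -> exists m, forall z, cyl y m z -> ~ S n z) ->
  exists n y m, cyl y m `<=` S n.
Proof.
move=> cover closedS; apply/not_existsP => H.
have step : forall p : nat * (cantor_space * nat), exists q : cantor_space * nat,
    [/\ cyl p.2.1 p.2.2 q.1, (p.2.2 < q.2)%N & forall z, cyl q.1 q.2 z -> ~ S p.1 z].
  move=> [n [y m]] /=.
  have : ~ (cyl y m `<=` S n) by move=> C; apply: (H n); exists y, m.
  move=> /existsNP [z /not_implyP [zin nS]].
  have [m' Hm'] := closedS n z nS.
  exists (z, (maxn m m').+1); split => //=; first by rewrite ltnS leq_maxl.
  move=> w Hw; apply: Hm' => i im; apply: Hw.
  by apply: leq_trans im _; apply: leq_trans (leq_maxr m m') _.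
have [st Hst] := choice step.
pose fix Q k := if k is k'.+1 then st (k', Q k') else (point : cantor_space, 0%N).
have Qin k : cyl (Q k).1 (Q k).2 (Q k.+1).1 by have [] := Hst (k, Q k).
have Qlt k : ((Q k).2 < (Q k.+1).2)%N by have [] := Hst (k, Q k).
have [n Sn] := cover (climit Q).
have [_ _ /(_ (climit Q))] := Hst (n, Q n); apply => //.
exact: (@climit_in Q Qin Qlt n.+1).
Qed.

End CantorTools.
Lemma cyl_forall (P : nat -> cantor_space -> Prop) y k :
  (forall j, (j < k)%N -> exists m, forall z, cyl y m z -> P j z) ->
  exists m, forall z, cyl y m z -> forall j, (j < k)%N -> P j z.
Proof.
elim: k => [|k IH] H; first by exists 0%N => z _ j.
have [m1 H1] := IH (fun j jk => H j (ltnW jk)).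
have [m2 H2] := H k (ltnSn k).
exists (maxn m1 m2) => z zc j; rewrite ltnS leq_eqVlt => /predU1P[->|jk].
  by apply: H2; apply: cyl_mono zc; exact: leq_maxr.
by apply: H1 => //; apply: cyl_mono zc; exact: leq_maxl.
Qed.

Lemma pigeon_core (X : eqType) (G : seq X) (N : nat -> set X) k :
  (forall j, (j < k)%N -> exists x, x \in G /\ N j x) ->
  (forall i j x, (i < k)%N -> (j < k)%N -> N i x -> N j x -> i = j) ->
  (0 < k)%N ->
  exists c : nat -> X, [/\ uniq (map c (iota 0 k)), {subset map c (iota 0 k) <= G}
     & forall j, (j < k)%N -> N j (c j)].
Proof.
move=> H D k0.
have [x0 _] := H 0%N k0.
have : forall j, exists x, (j < k)%N -> x \in G /\ N j x.
  move=> j; case: (ltnP j k) => jk; first by have [x Hx] := H j jk; exists x.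
  by exists x0.
move=> /choice [c Hc]; exists c; split.
- rewrite map_inj_in_uniq ?iota_uniq // => i j; rewrite !mem_iota /= !add0n => ik jk cij.
  have [_ Ni] := Hc i ik; have [_ Nj] := Hc j jk.
  by apply: (D i j (c i)) => //; rewrite cij.
- by move=> x /mapP [j]; rewrite mem_iota add0n /= => jk ->; have [] := Hc j jk.
- by move=> j jk; have [] := Hc j jk.
Qed.

Lemma pigeon (X : eqType) (G : seq X) (N : nat -> set X) k :
  (forall j, (j < k)%N -> exists x, x \in G /\ N j x) ->
  (forall i j x, (i < k)%N -> (j < k)%N -> N i x -> N j x -> i = j) ->
  (k <= size G)%N.
Proof.
move=> H D; case: (posnP k) => [->//|k0].
have [c [u s _]] := pigeon_core H D k0.
by have := uniq_leq_size u s; rewrite size_map size_iota.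
Qed.

Lemma pigeon2 (X : eqType) (G : seq X) (N : nat -> set X) k :
  (forall j, (j < k)%N -> exists x, x \in G /\ N j x) ->
  (forall i j x, (i < k)%N -> (j < k)%N -> N i x -> N j x -> i = j) ->
  (size G <= k)%N ->
  forall x, x \in G -> exists j, [/\ (j < k)%N, N j x &
     forall x', x' \in G -> N j x' -> x' = x].
Proof.
move=> H D sG x xG; case: (posnP k) => [k0|k0].
  by move: sG xG; rewrite k0 leqn0 => /nilP ->.
have [c [u s Nc]] := pigeon_core H D k0.
have sz : (size G <= size (map c (iota 0 k)))%N by rewrite size_map size_iota.
have [_ eqs] := uniq_min_size u s sz.
have inv z : z \in G -> exists2 j, (j < k)%N & z = c j.
  by rewrite -eqs => /mapP [j]; rewrite mem_iota add0n => jk ->; exists j.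
have [j jk ->] := inv x xG.
exists j; split => //; first exact: Nc.
move=> x' x'G; have [j' j'k ->] := inv x' x'G; move=> Nx'.
by rewrite (D j' j (c j') j'k jk (Nc j' j'k) Nx').
Qed.
Section Embed.
Variable K : topologicalType.
Hypothesis hK : hausdorff_space K.

Lemma embed_contains (F : cantor_space -> K) :
  continuous F -> injective F -> contains_cantor K.
Proof.
move=> cF iF.
pose g (k : K) : cantor_space :=
  if pselect (exists s, F s = k) is left H then projT1 (cid H) else point.
have gF s : g (F s) = s.
  rewrite /g; case: pselect => [H|[]]; last by exists s.
  by apply: iF; exact: (projT2 (cid H)).
exists (range F), F, g; split => //.
  by move=> _ [s _ <-]; rewrite gF.
apply/subspace_continuousP => _ [s _ <-]; rewrite /from_subspace gF.
move=> W /= /nbhs_cyl [m Hm]; rewrite nbhs_simpl /=.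
pose C := ~` cyl s m.
have clC : closed C by rewrite /C closedC; exact: cyl_open.
have cpC : compact C.
  apply: (subclosed_compact clC cantor_space_compact) => //.
have cpFC : compact (F @` C).
  by apply: continuous_compact => //; exact: continuous_subspaceT.
have clFC : closed (F @` C) by exact: compact_closed.
have : open (~` (F @` C)) by rewrite openC.
move=> oP; have nP : nbhs (F s) (~` (F @` C)).
  apply: open_nbhs_nbhs; split => // -[t Ct /iF ts]; by apply: Ct; rewrite ts.
suff : nbhs (F s) (fun k => range F k -> W (g k)) by [].
apply: filterS nP => k Pk [t _ tk]; rewrite -tk gF; apply: Hm.
by apply: contrapT => Ct; apply: Pk; exists t.
Qed.

End Embed.
Section Scheme.
Variable K : topologicalType.
Hypothesis hK : hausdorff_space K.

Lemma scheme_contains (O : set cantor_space) (x : cantor_space -> K)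
    (w : cantor_space) (p : nat) :
  cyl w p `<=` O ->
  (forall z, O z -> forall U, open U -> U (x z) ->
     exists m, forall z', cyl z m z' -> O z' -> U (x z')) ->
  (forall w' p', cyl w p w' -> (p <= p')%N ->
     exists a b, [/\ cyl w' p' a, cyl w' p' b & x a <> x b]) ->
  contains_cantor K.
Proof.
move=> wO xc nlc.
have sub q : cyl w p q.1 -> (p <= q.2)%N -> cyl q.1 q.2 `<=` O.
  by move=> H1 H2; apply: subset_trans wO; apply: cyl_trans.
have split : forall q : cantor_space * nat, exists f : bool -> cantor_space * nat,
    cyl w p q.1 /\ (p <= q.2)%N ->
    [/\ forall b, cyl q.1 q.2 (f b).1, forall b, (q.2 < (f b).2)%N &
        forall z1 z2, cyl (f true).1 (f true).2 z1 -> cyl (f false).1 (f false).2 z2 ->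
        x z1 <> x z2].
  move=> q; have [[H1 H2]|] := pselect (cyl w p q.1 /\ (p <= q.2)%N); last first.
    by move=> nH; exists (fun _ => q) => /nH.
  have [a [b [qa qb xab]]] := nlc _ _ H1 H2.
  have := hK; rewrite open_hausdorff => /(_ (x a) (x b)) [].
    by apply/eqP.
  move=> [A B] /= [/set_mem Aa /set_mem Bb] [oA oB /eqP AB0].
  have [ma Hma] := xc a (sub q H1 H2 a qa) A oA Aa.
  have [mb Hmb] := xc b (sub q H1 H2 b qb) B oB Bb.
  exists (fun c => if c then (a, (maxn ma q.2).+1) else (b, (maxn mb q.2).+1)) => _.
  split; first by case.
    by case => /=; rewrite ltnS leq_maxr.
  move=> z1 z2 /= H1z H2z E.
  have Az1 : A (x z1).
    apply: Hma; first by apply: cyl_mono H1z; apply: leq_trans (leq_maxl _ _) (leqnSn _).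
    apply: (sub q H1 H2); apply: (cyl_trans _ qa) H1z.
    by apply: leq_trans (leq_maxr _ _) (leqnSn _).
  have Bz2 : B (x z2).
    apply: Hmb; first by apply: cyl_mono H2z; apply: leq_trans (leq_maxl _ _) (leqnSn _).
    apply: (sub q H1 H2); apply: (cyl_trans _ qb) H2z.
    by apply: leq_trans (leq_maxr _ _) (leqnSn _).
  have : (A `&` B) (x z1) by split => //; rewrite E.
  by rewrite AB0.
have [st Hst] := choice split.
pose Qs (s : cantor_space) := fix Qs k :=
  if k is k'.+1 then st (Qs k') (s k') else (w, p).
have Inv s k : cyl w p (Qs s k).1 /\ (p <= (Qs s k).2)%N.
  elim: k => [//|k [I1 I2]] /=.
  have [Hb1 Hb2 _] := Hst _ (conj I1 I2).
  split; first by apply: cyl_trans I2 I1 _ _; exact: Hb1.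
  exact: leq_trans I2 (ltnW (Hb2 _)).
have Qin s k : cyl (Qs s k).1 (Qs s k).2 (Qs s k.+1).1.
  by have [Hb1 _ _] := Hst _ (Inv s k); exact: Hb1.
have Qlt s k : ((Qs s k).2 < (Qs s k.+1).2)%N.
  by have [_ Hb2 _] := Hst _ (Inv s k); exact: Hb2.
have Qagree s t k : (forall i, (i < k)%N -> s i = t i) -> Qs s k = Qs t k.
  elim: k => [//|k IH] H /=; rewrite IH ?H //.
  by move=> i ik; apply: H; apply: ltnW.
pose e s := climit (Qs s).
have e_in s k : cyl (Qs s k).1 (Qs s k).2 (e s) := @climit_in (Qs s) (Qin s) (Qlt s) k.
have eO s : O (e s) by apply: (sub _ (Inv s 0).1 (Inv s 0).2); exact: e_in.
apply: (@embed_contains K hK (x \o e)).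
  apply: continuous_cyl => s U oU /= Ux.
  have [m Hm] := xc _ (eO s) U oU Ux.
  exists m => t st_; apply: Hm (eO t) => i im.
  by rewrite /e /climit (Qagree t s i.+1) // => j ji; apply: st_; apply: leq_trans ji im.
move=> s t /= xst; apply: contrapT => nst.
have exi : exists i, s i != t i.
  apply: contrapT => /forallNP H; apply: nst.
  by apply: functional_extensionality_dep => i; have := H i; case: eqP.
case: (ex_minnP exi) => k skt kmin.
have Qst : Qs s k = Qs t k.
  apply: Qagree => i ik; apply/eqP; apply: contraTT ik => /kmin; rewrite leqNgt.
  by [].
have [_ _ Hd] := Hst _ (Inv s k).
have es := e_in s k.+1; have et := e_in t k.+1.
move: es et => /= es et; rewrite -Qst in et.
move: skt es et; case: (s k); case: (t k) => // _ es et.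
  all: first [exact: (Hd _ _ es et xst) | exact: (Hd _ _ et es (esym xst))].
Qed.

End Scheme.
Section Bump.
Variable R : realType.
Variable X : topologicalType.
Hypothesis cX : compact [set: X].
Hypothesis hX : hausdorff_space X.

Lemma bump (A : set X) (x : X) : closed A -> ~ A x ->
  exists u : X -> R, [/\ continuous u, u x = 1 & forall z, A z -> u z = 0].
Proof.
move=> clA nAx.
have nX := compact_normal hX cX.
have cl1 : closed [set x] by apply: accessible_closed_set1; exact: hausdorff_accessible.
have sep : uniform_separator A [set x].
  apply: ((proj1 (@normal_separatorP R X) nX) A [set x] clA cl1).
  by rewrite -subset0 => z [Az /= zx]; apply: nAx; rewrite -zx.
have [u [cu _ u0 u1]] := (proj1 (@uniform_separatorP X R A [set x])) sep.
exists u; split => //.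
  by apply: u1; exists x.
by move=> z Az; apply: u0; exists z.
Qed.

Lemma closed_seq (G : seq X) : closed [set z | z \in G].
Proof.
elim: G => [|a G IH].
  rewrite (_ : [set z : X | z \in [::]] = set0); first exact: closed0.
  by apply/seteqP; split => z.
have -> : [set z : X | z \in a :: G] = [set a] `|` [set z | z \in G].
  apply/seteqP; split => z /=; rewrite in_cons.
    by case/orP => [/eqP ->|]; [left|right].
  by case => [->|->]; rewrite ?eqxx ?orbT.
apply: closedU => //; apply: accessible_closed_set1; exact: hausdorff_accessible.
Qed.

Lemma near_gt (Y : topologicalType) (h : Y -> R) (z : Y) (c : R) :
  continuous h -> c < h z -> nbhs z [set z' | c < h z'].
Proof.
move=> ch czz; have : nbhs (h z) [set r | c < r].
  by apply: open_nbhs_nbhs; split => //; exact: open_gt.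
by move/(ch z).
Qed.

Lemma near_lt (Y : topologicalType) (h : Y -> R) (z : Y) (c : R) :
  continuous h -> h z < c -> nbhs z [set z' | h z' < c].
Proof.
move=> ch czz; have : nbhs (h z) [set r | r < c].
  by apply: open_nbhs_nbhs; split => //; exact: open_lt.
by move/(ch z).
Qed.

Lemma cont_scale (Y : topologicalType) (c : R) (f : Y -> R) :
  continuous f -> continuous (fun x => c * f x).
Proof.
move=> cf x; apply: (@continuousM R Y (fun=> c) f x); [exact: cst_continuous | exact: cf].
Qed.

Lemma cont_mul (Y : topologicalType) (f g : Y -> R) :
  continuous f -> continuous g -> continuous (fun x => f x * g x).
Proof. by move=> cf cg x; exact: (@continuousM R Y f g x (cf x) (cg x)). Qed.

Lemma cont_sub (Y : topologicalType) (f g : Y -> R) :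
  continuous f -> continuous g -> continuous (fun x => f x - g x).
Proof.
move=> cf cg x; apply: (@continuousD R R^o Y f (fun x => - g x) x (cf x)).
exact: (@continuousN R R^o Y g x (cg x)).
Qed.

Lemma disjoint_nbhds (G : seq X) (x0 : X) : uniq G ->
  exists N : nat -> set X, [/\ forall j, open (N j),
    forall j, (j < size G)%N -> N j (nth x0 G j) &
    forall i j x, (i < size G)%N -> (j < size G)%N -> N i x -> N j x -> i = j].
Proof.
move=> uG; set n := size G.
have : forall j, exists h : X -> R, continuous h /\ ((j < n)%N ->
    h (nth x0 G j) = 1 /\ forall i, (i < n)%N -> i != j -> h (nth x0 G i) = 0).
  move=> j; case: (ltnP j n) => jn; last first.
    by exists (fun _ => 0); split => //; exact: cst_continuous.
  have nA : ~ [set z | z \in [seq w <- G | w != nth x0 G j]] (nth x0 G j).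
    by rewrite /= mem_filter /= eqxx.
  have [u [cu u1 u0]] := @bump [set z | z \in [seq w <- G | w != nth x0 G j]]
    (nth x0 G j) (@closed_seq [seq w <- G | w != nth x0 G j]) nA.
  exists u; split => // _; split => // i ilt ij; apply: u0.
  by rewrite /= mem_filter /= mem_nth // andbT nth_uniq.
move=> /choice [h Hh].
exists (fun j => [set z | 1/2 < h j z /\ forall i, (i < n)%N -> i != j -> h i z < 1/2]).
split.
- move=> j; rewrite openE => z [H1 H2].
  have n1 : nbhs z [set z' | 1/2 < h j z'] by apply: near_gt => //; case: (Hh j).
  have n2 : \forall z' \near z, forall i : 'I_n, (i != j :> nat) -> h i z' < 1/2.
    apply: filter_forall => i; case: (boolP (i != j :> nat)) => ij.
      have : nbhs z [set z' | h i z' < 1/2].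
        by apply: near_lt => //; [case: (Hh i) | exact: H2].
      by apply: filterS => z' Hz' _.
    by apply: nearW => z' Hz'; exfalso; move/negP: ij; apply.
  apply: filterS (filterI n1 n2) => z' [Hz1 Hz2]; split => // i ilt ij.
  exact: (Hz2 (Ordinal ilt)).
- move=> j jn; have [_ /(_ jn) [h1 h0]] := Hh j; split; first by rewrite h1 ltr_pdivrMr // mul1r ltr1n.
  move=> i ilt ij; have [_ /(_ ilt) [_ h0']] := Hh i.
  by rewrite h0' // eq_sym.
- move=> i j z ilt jlt [Hi1 Hi2] [Hj1 Hj2]; apply/eqP; apply: contraT => ij.
  by have := lt_trans Hi1 (Hj2 i ilt ij); rewrite ltxx.
Qed.

End Bump.
Section Core.
Variable R : realType.
Variables K L : topologicalType.
Hypothesis cK : compact [set: K].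
Hypothesis hK : hausdorff_space K.
Hypothesis cL : compact [set: L].
Hypothesis hL : hausdorff_space L.
Variable T : (K -> R) -> (L -> R).
Hypothesis HT : Cp_cont_linear_surj T.
Variable phi : cantor_space -> L.
Hypothesis phic : continuous phi.
Hypothesis phii : injective phi.

Let Tc (f : K -> R) : continuous f -> continuous (T f).
Proof. by case: HT => + _ _ _; apply. Qed.

Let Tl (a : R) (f g : K -> R) : continuous f -> continuous g ->
  T (fun x => a * f x + g x) = (fun y => a * T f y + T g y).
Proof. by case: HT => _ + _ _; apply. Qed.

Let Ts (h : L -> R) : continuous h -> exists f, continuous f /\ T f = h.
Proof. by case: HT => _ _ _; apply. Qed.

Let c0 : continuous (fun _ : K => 0 : R).
Proof. exact: cst_continuous. Qed.

Lemma T0 : T (fun _ => 0) = (fun _ => 0).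
Proof.
have := Tl (-1) c0 c0.
have -> : (fun x : K => -1 * (0 : R) + 0) = (fun _ => 0).
  by apply/funext => x; rewrite mulr0 addr0.
move=> E; apply/funext => y; have /= := congr1 (fun h => h y) E.
by rewrite mulN1r addNr.
Qed.

Lemma TZ (a : R) (f : K -> R) : continuous f -> T (fun x => a * f x) = (fun y => a * T f y).
Proof.
move=> cf; have := Tl a cf c0; rewrite T0.
have -> : (fun x => a * f x + 0) = (fun x => a * f x).
  by apply/funext => x; rewrite addr0.
by move=> ->; apply/funext => y; rewrite addr0.
Qed.

Lemma TB (f g : K -> R) : continuous f -> continuous g ->
  T (fun x => f x - g x) = (fun y => T f y - T g y).
Proof.
move=> cf cg; have := Tl (-1) cg cf.
have -> : (fun x => -1 * g x + f x) = (fun x => f x - g x).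
  by apply/funext => x; rewrite mulN1r addrC.
by move=> ->; apply/funext => y; rewrite mulN1r addrC.
Qed.

Lemma Tsum m (a : 'I_m -> R) (fs : 'I_m -> K -> R) :
  (forall i, continuous (fs i)) ->
  continuous (fun x => \sum_(i < m) a i * fs i x) /\
  T (fun x => \sum_(i < m) a i * fs i x) = (fun y => \sum_(i < m) a i * T (fs i) y).
Proof.
elim: m a fs => [|m IH] a fs cfs.
  have -> : (fun x : K => \sum_(i < 0) a i * fs i x) = (fun _ => 0).
    by apply/funext => x; rewrite big_ord0.
  by split => //; rewrite T0; apply/funext => y; rewrite big_ord0.
have [cS TS] := IH (fun i => a (widen_ord (leqnSn m) i))
  (fun i => fs (widen_ord (leqnSn m) i)) (fun i => cfs _).
have -> : (fun x => \sum_(i < m.+1) a i * fs i x) =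
   (fun x => a ord_max * fs ord_max x +
      \sum_(i < m) a (widen_ord (leqnSn m) i) * fs (widen_ord (leqnSn m) i) x).
  by apply/funext => x; rewrite big_ord_recr /= addrC.
split.
  move=> x.
  have h1 : {for x, continuous (fun x => a ord_max * fs ord_max x)}.
    by apply: continuousM; [exact: cst_continuous | exact: cfs].
  exact: (@continuousD R R^o K _ _ x h1 (cS x)).
rewrite Tl //; apply/funext => y; rewrite big_ord_recr /= addrC TS //.
Qed.

Definition supp (y : cantor_space) (G : seq K) :=
  forall f, continuous f -> (forall x, x \in G -> f x = 0) -> T f (phi y) = 0.

Lemma supp_exists y : exists G, supp y G.
Proof.
case: HT => _ _ Tcont _.
have H0 := (proj1 (subspace_continuousP _ _) Tcont) (fun _ => 0) c0.
pose W := [set h : {ptws L -> R} | `|h (phi y)| < 1].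
have nW : nbhs (T (fun _ => 0) : {ptws L -> R}) W.
  have : nbhs (T (fun _ => 0) (phi y)) [set r : R | `|r| < 1].
    rewrite T0; apply: (@near_lt R R (fun r : R => `|r|)) => //; first exact: norm_continuous.
    by rewrite normr0.
  by move/(@proj_continuous L (fun _ => R) (phi y) (T (fun _ => 0))).
have := H0 W nW; rewrite /= nbhs_simpl /=.
move=> /prod_nbhs_fin [s Hs]; exists s => f cf fs.
apply: contrapT => /eqP nz.
have cg : continuous (fun x => (T f (phi y))^-1 * f x) by exact: cont_scale.
have := Hs (fun x => (T f (phi y))^-1 * f x).
move=> /(_ _ cg) /=.
rewrite /from_subspace /W /= TZ // mulVf // normr1 ltxx => H.
suff : false by []; apply: H => i /fs ->; by rewrite mulr0.
Qed.


Lemma mu_near (F : K -> R) y : continuous F -> T F (phi y) != 0 ->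
  exists m, forall z, cyl y m z -> T F (phi z) != 0.
Proof.
move=> cF nz.
have ch : continuous (fun z => `|T F (phi z)|).
  move=> z; apply: continuous_comp; last exact: norm_continuous.
  apply: continuous_comp; [exact: phic | exact: Tc].
have := @near_gt R cantor_space _ y 0 ch; rewrite normr_gt0 => /(_ nz).
move=> /nbhs_cyl [m Hm]; exists m => z /Hm /=; by rewrite normr_gt0.
Qed.

Definition ess y (p : K) := forall N, open N -> N p ->
  exists f, [/\ continuous f, forall z, ~ N z -> f z = 0 & T f (phi y) != 0].

Lemma ess_in y p G : ess y p -> supp y G -> p \in G.
Proof.
move=> ep sG; apply: contraT => pG.
have oN : open (~` [set z | z \in G]) by rewrite openC; exact: closed_seq.
have [f [cf f0 nz]] := ep _ oN (fun H => negP pG H).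
have Tf0 : T f (phi y) = 0 by apply: sG => // x xG; apply: f0 => /(_ xG).
by rewrite Tf0 eqxx in nz.
Qed.

Lemma uniq_rem_char (X : eqType) (G : seq X) :
  (forall x, x \in G -> x \notin rem x G) -> uniq G.
Proof.
elim: G => [//|a G IH] H /=.
have := H a (mem_head _ _); rewrite /= eqxx => aG; rewrite aG /=.
apply: IH => x xG; have := H x; rewrite in_cons xG orbT /= => /(_ isT).
case: eqP => [_|_]; first by rewrite xG.
by rewrite in_cons negb_or => /andP[].
Qed.

Lemma minsupp_ess y G : supp y G -> (forall G', supp y G' -> (size G <= size G')%N) ->
  (forall p, p \in G -> ess y p) /\ uniq G.
Proof.
move=> sG minG.
have key x : x \in G -> exists f, [/\ continuous f, forall z, z \in rem x G -> f z = 0,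
    T f (phi y) != 0 & x \notin rem x G].
  move=> xG.
  have nsupp : ~ supp y (rem x G).
    have sz : (0 < size G)%N by case: (G) xG.
    move=> /minG; rewrite size_rem // => H.
    by move: H; rewrite leqNgt ltn_predL sz.
  move: nsupp => /existsNP [f /not_implyP [cf /not_implyP [f0 /eqP nz]]].
  exists f; split => //; apply/negP => xr.
  suff E : T f (phi y) = 0 by rewrite E eqxx in nz.
  apply: sG => // z zG.
  case: (eqVneq z x) => [->|zx]; first exact: f0.
  by apply: f0; rewrite rem_mem.
split; last first.
  by apply: uniq_rem_char => x /key [f [_ _ _ ?]].
move=> p pG N oN Np.
have [f [cf f0 nz _]] := key p pG.
have [u [cu u1 u0]] := @bump R K cK hK (~` N) p (open_closedC oN) (fun H => H Np).
have cuf : continuous (fun z => u z * f z) by exact: cont_mul.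
exists (fun z => u z * f z); split => //.
  by move=> z Nz; rewrite u0 ?mul0r.
have csub : continuous (fun z => u z * f z - f z) by exact: cont_sub.
have := TB cuf cf; move=> /(congr1 (fun h => h (phi y))) /=.
rewrite sG //; last first.
  move=> z zG; case: (eqVneq z p) => [->|zp]; first by rewrite u1 mul1r subrr.
  by rewrite f0 ?rem_mem // mulr0 subrr.
move/eqP; rewrite eq_sym subr_eq0 => /eqP ->; exact: nz.
Qed.

Lemma local_structure y G : supp y G ->
  (forall G', supp y G' -> (size G <= size G')%N) ->
  exists (N : nat -> set K) (m : nat), [/\ forall j, open (N j),
     forall i j x, (i < size G)%N -> (j < size G)%N -> N i x -> N j x -> i = j &
     forall z, cyl y m z -> forall j, (j < size G)%N -> forall G', supp z G' ->
       exists x, x \in G' /\ N j x].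
Proof.
move=> sG minG; have [essG uG] := minsupp_ess sG minG.
case: G sG minG essG uG => [|x0 G'] sG minG essG uG.
  by exists (fun _ => set0), 0%N; split => // _; exact: open0.
set G := x0 :: G' in sG minG essG uG *.
have [N [oN inN dN]] := @disjoint_nbhds R K cK hK G x0 uG.
have : forall j, exists F, (j < size G)%N ->
    [/\ continuous F, forall z, ~ N j z -> F z = 0 & T F (phi y) != 0].
  move=> j; case: (ltnP j (size G)) => js; last by exists (fun _ => 0).
  have [F HF] := essG _ (mem_nth x0 js) (N j) (oN j) (inN j js); by exists F.
move=> /choice [F HF].
have [m Hm] := @cyl_forall (fun j z => T (F j) (phi z) != 0) y (size G)
  (fun j js => let: And3 cF _ nz := HF j js in mu_near cF nz).
exists N, m; split => // z zc j js G'' sG''.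
apply: contrapT => /forallNP H.
have [cF F0 _] := HF j js.
have := Hm z zc j js; apply/negP; rewrite negbK; apply/eqP; apply: sG'' => // x xG.
by apply: F0 => Nx; apply: (H x); split.
Qed.

Lemma no_common_supp y m G : ~ (forall z, cyl y m z -> supp z G).
Proof.
move=> H; set n := size G.
pose zp (i : 'I_n.+1) : cantor_space := fun l => if (l < m)%N then y l else (l == m + i)%N.
have zpc i : cyl y m (zp i) by move=> l lm; rewrite /zp lm.
have zpi : injective zp.
  move=> i j /(congr1 (fun s : cantor_space => s (m + i)%N)).
  rewrite /zp ltnNge leq_addr /= eqxx eqn_add2l => /esym/eqP ij; exact: val_inj.
pose q i := phi (zp i).
have qi : injective q by move=> i j /phii /zpi.
have : forall i : 'I_n.+1, exists h : L -> R,
    [/\ continuous h, h (q i) = 1 & forall j, j != i -> h (q j) = 0].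
  move=> i.
  pose A := [set w | w \in [seq q j | j <- enum 'I_n.+1 & j != i]].
  have nA : ~ A (q i).
    rewrite /A /= => /mapP [j]; rewrite mem_filter => /andP [ji _] /qi ij.
    by rewrite ij eqxx in ji.
  have [h [ch h1 h0]] := @bump R L cL hL A (q i) (@closed_seq L hL _) nA.
  exists h; split => // j ji; apply: h0; rewrite /A /=.
  by apply/mapP; exists j => //; rewrite mem_filter ji mem_enum.
move=> /choice [h Hh].
have : forall i : 'I_n.+1, exists f, continuous f /\ T f = h i.
  by move=> i; apply: Ts; have [] := Hh i.
move=> /choice [f Hf].
pose A : 'M[R]_(n.+1, n) := \matrix_(i, j) f i (tnth (in_tuple G) j).
have kz : kermx A != 0.
  apply/eqP => k0; have := mxrank_ker A; rewrite k0 mxrank0 => /esym/eqP.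
  rewrite subn_eq0 => /leq_trans /(_ (rank_leq_col A)); by rewrite ltnn.
have [i0 ri0] : exists i, row i (kermx A) != 0.
  apply/existsP; apply: contraT; rewrite negb_exists => /forallP R0.
  suff K0 : kermx A = 0 by rewrite K0 eqxx in kz.
  apply/row_matrixP => i; rewrite row0.
  by apply/eqP; move: (R0 i); rewrite negbK.
set a := row i0 (kermx A).
have aA : a *m A = 0 by rewrite /a -row_mul mulmx_ker row0.
have [cF TF] := @Tsum n.+1 (fun l => a ord0 l) f (fun l => (Hf l).1).
have Fv : forall x, x \in G -> \sum_(l < n.+1) a ord0 l * f l x = 0.
  move=> x xG; have : x \in in_tuple G by [].
  move=> /tnthP [j ->].
  have := congr1 (fun M : matrix R 1 n => M ord0 j) aA; rewrite !mxE => E.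
  by rewrite -[X in _ = X]E; apply: eq_bigr => l _; rewrite /A !mxE.
apply/negP: ri0; rewrite negbK; apply/eqP/rowP => k; rewrite [LHS]mxE [RHS]mxE.
have := H _ (zpc k) _ cF Fv; rewrite TF (bigD1 k) //= big1 => [|l lk]; last first.
  have [_ ->] := Hf l; rewrite -/(q k); have [_ _ ->] := Hh l; first by rewrite mulr0.
  by rewrite eq_sym.
rewrite addr0; have [_ ->] := Hf k; rewrite -/(q k); have [_ -> _] := Hh k.
by rewrite mulr1 => E; rewrite -E /a [RHS]mxE.
Qed.

Lemma minsupp_exists y : exists G, supp y G /\
  forall G', supp y G' -> (size G <= size G')%N.
Proof.
have ex : exists k, `[< exists G, size G = k /\ supp y G >].
  by have [G sG] := supp_exists y; exists (size G); apply/asboolP; exists G.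
case: (ex_minnP ex) => k /asboolP [G [sz sG]] Hmin.
exists G; split => // G' sG'; rewrite sz; apply: Hmin; apply/asboolP; by exists G'.
Qed.

Definition Sn n y := exists G, (size G <= n)%N /\ supp y G.

Lemma Sn_closed n y : ~ Sn n y -> exists m, forall z, cyl y m z -> ~ Sn n z.
Proof.
move=> nS; have [G [sG minG]] := minsupp_exists y.
have nG : (n < size G)%N by rewrite ltnNge; apply/negP => Gn; apply: nS; exists G.
have [N [m [oN dN meet]]] := local_structure sG minG.
exists m => z zc [G' [G'n sG']].
have := @pigeon _ G' N (size G) (fun j js => meet z zc j js G' sG') dN.
by move=> /(leq_trans) /(_ G'n); rewrite leqNgt nG.
Qed.

Lemma main_core : contains_cantor K.
Proof.
have [n0 [y [m Hm]]] := @baire_cyl Sn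
  (fun y => let: ex_intro G sG := supp_exists y in ex_intro _ (size G) (ex_intro _ G (conj (leqnn _) sG)))
  Sn_closed.
have ex : exists n, `[< exists y m, cyl y m `<=` Sn n >].
  by exists n0; apply/asboolP; exists y, m.
case: (ex_minnP ex) => n /asboolP [y1 [m1 Hcyl]] nmin.
case: n nmin Hcyl => [|n'] nmin Hcyl.
  apply: False_ind; apply: (@no_common_supp y1 m1 [::]) => z /Hcyl [G [G0 sG]].
  by move: G0 sG; rewrite leqn0 => /nilP ->.
set n := n'.+1 in Hcyl nmin *.
have [y0 [y0c ny0]] : exists y0, cyl y1 m1 y0 /\ ~ Sn n' y0.
  apply: contrapT => C; have : (n <= n')%N.
    apply: nmin; apply/asboolP; exists y1, m1 => z zc.
    by apply: contrapT => nz; apply: C; exists z.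
  by rewrite ltnn.
have [G0 [sG0 minG0]] := minsupp_exists y0.
have [G1 [G1n sG1]] := Hcyl y0 y0c.
have szG0 : size G0 = n.
  apply/eqP; rewrite eqn_leq (leq_trans (minG0 _ sG1) G1n) /=.
  by rewrite ltnNge; apply/negP => Gn; apply: ny0; exists G0.
have [N [m0 [oN dN meet]]] := local_structure sG0 minG0.
rewrite szG0 in dN meet.
set M := maxn m0 m1.
pose O := cyl y0 M.
have O_m0 z : O z -> cyl y0 m0 z by apply: cyl_mono; exact: leq_maxl.
have O_S z : O z -> Sn n z.
  move=> Oz; apply: Hcyl; apply: (cyl_trans (leq_maxr m0 m1) y0c).
  exact: Oz.
have facts z : O z -> exists Gz, [/\ supp z Gz, size Gz = n,
    forall p, p \in Gz -> ess z p &
    forall x, x \in Gz -> exists j, [/\ (j < n)%N, N j x &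
       forall x', x' \in Gz -> N j x' -> x' = x]].
  move=> Oz; have [Gz [sGz minGz]] := minsupp_exists z.
  have mz := meet z (O_m0 z Oz).
  have szz : size Gz = n.
    apply/eqP; rewrite eqn_leq; have [G2 [G2n sG2]] := O_S z Oz.
    rewrite (leq_trans (minGz _ sG2) G2n) /=.
    exact: (@pigeon _ Gz N n (fun j jn => mz j jn Gz sGz) dN).
  have [essz _] := minsupp_ess sGz minGz.
  exists Gz; split => //.
  apply: (@pigeon2 _ Gz N n (fun j jn => mz j jn Gz sGz) dN).
  by rewrite szz.
have ex_ess z j : O z -> (j < n)%N -> exists p, N j p /\ ess z p.
  move=> Oz jn; have [Gz [sGz _ essz _]] := facts z Oz.
  have [x [xG Nx]] := meet z (O_m0 z Oz) j jn Gz sGz.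
  by exists x; split => //; apply: essz.
have uniq_ess z j p p' : O z -> (j < n)%N -> N j p -> ess z p -> N j p' -> ess z p' -> p' = p.
  move=> Oz jn Np ep Np' ep'; have [Gz [sGz _ _ pig]] := facts z Oz.
  have pG := ess_in ep sGz; have p'G := ess_in ep' sGz.
  have [j' [j'n Nj' U]] := pig p pG.
  by apply: U => //; rewrite (dN j' j p j'n jn Nj' Np).
have [x0 _] : exists x0 : K, True.
  by have [p _] := ex_ess y0 0%N (@cyl_refl y0 M) (ltn0Sn _); exists p.
pose xs j z := if pselect (exists p, N j p /\ ess z p) is left H then projT1 (cid H) else x0.
have xsP z j : O z -> (j < n)%N -> N j (xs j z) /\ ess z (xs j z).
  move=> Oz jn; rewrite /xs; case: pselect => [H|]; first exact: (projT2 (cid H)).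
  by move=> C; exfalso; apply: C; exact: ex_ess.
have Lsupp z : O z -> supp z [seq xs j z | j <- iota 0 n].
  move=> Oz f cf f0; have [Gz [sGz _ essz pig]] := facts z Oz.
  apply: sGz => // x xG; apply: f0.
  have [j [jn Nx _]] := pig x xG; have [Nj ej] := xsP z j Oz jn.
  rewrite (uniq_ess z j (xs j z) x Oz jn Nj ej Nx (essz x xG)).
  by apply/mapP; exists j => //; rewrite mem_iota add0n.
have xs_cont j : (j < n)%N -> forall z, O z -> forall U, open U -> U (xs j z) ->
    exists m, forall z', cyl z m z' -> O z' -> U (xs j z').
  move=> jn z Oz U oU Uz; have [Nj ej] := xsP z j Oz jn.
  have [F [cF F0 nz]] := ej (U `&` N j) (openI oU (oN j)) (conj Uz Nj).
  have [m' Hm'] := mu_near cF nz.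
  exists m' => z' z'c Oz'; have [Gz [sGz _ essz _]] := facts z' Oz'.
  have : exists q, q \in Gz /\ F q != 0.
    apply: contrapT => C; move: (Hm' z' z'c); rewrite sGz ?eqxx // => q qG.
    by case: (eqVneq (F q) 0) => // nq; exfalso; apply: C; exists q.
  move=> [q [qG Fq]].
  have [Uq Nq] : (U `&` N j) q by apply: contrapT => nq; move: Fq; rewrite F0 ?eqxx.
  have [Nj' ej'] := xsP z' j Oz' jn.
  by rewrite (uniq_ess z' j q (xs j z') Oz' jn Nq (essz q qG) Nj' ej').
(* iterative search for a coordinate which is nowhere locally constant *)
pose good j := exists w p, cyl w p `<=` O /\ forall w' p', cyl w p w' -> (p <= p')%N ->
    exists a b, [/\ cyl w' p' a, cyl w' p' b & xs j a <> xs j b].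
have iter t : (t <= n)%N -> (exists2 j, (j < t)%N & good j) \/
    exists w p, cyl w p `<=` O /\ forall j a, (j < t)%N -> cyl w p a -> xs j a = xs j w.
  elim: t => [_|t IH tn]; first by right; exists y0, M; split.
  case: (IH (ltnW tn)) => [[j jt gj]|[w [p [wO Hc]]]].
    by left; exists j => //; apply: ltnW.
  have [NL|nNL] := pselect (forall w' p', cyl w p w' -> (p <= p')%N ->
    exists a b, [/\ cyl w' p' a, cyl w' p' b & xs t a <> xs t b]).
    by left; exists t => //; exists w, p.
  right.
  have [w' [p' [w'c pp' Hc']]] : exists w' p', [/\ cyl w p w', (p <= p')%N &
      forall a, cyl w' p' a -> xs t a = xs t w'].
    apply: contrapT => C; apply: nNL => w' p' H1 H2; apply: contrapT => C2; apply: C.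
    exists w', p'; split => // a Ha; apply: contrapT => ne; apply: C2.
    by exists a, w'; split.
  have sub : cyl w' p' `<=` cyl w p by apply: cyl_trans.
  exists w', p'; split; first exact: subset_trans sub wO.
  move=> j a; rewrite ltnS leq_eqVlt => /predU1P[->|jt] ca; first exact: Hc'.
  by rewrite (Hc j a jt (sub _ ca)) (Hc j w' jt w'c).
case: (iter n (leqnn n)) => [[j jn [w [p [wO nlc]]]]|[w [p [wO Hc]]]].
  exact: (@scheme_contains K hK O (xs j) w p wO (xs_cont j jn) nlc).
apply: False_ind; apply: (@no_common_supp w p [seq xs j w | j <- iota 0 n]) => z zc.
have -> : [seq xs j w | j <- iota 0 n] = [seq xs j z | j <- iota 0 n].
  apply/eq_in_map => j; rewrite mem_iota add0n => jn; rewrite (Hc j z) //.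
exact: Lsupp (wO _ zc).
Qed.
End Core.

Unset Implicit Arguments.

Theorem theorem4p6 (R : realType) (K L : topologicalType)
  (cK : compact [set: K]) (hK : hausdorff_space K)
  (cL : compact [set: L]) (hL : hausdorff_space L)
  (T : (K -> R) -> (L -> R)) (HT : Cp_cont_linear_surj T) :
  contains_cantor L -> contains_cantor K.
Proof.
move=> [A [f [g [Af gf fg cf cg]]]].
apply: (@main_core R K L cK hK cL hL T HT f cf).
by move=> a b /(congr1 g); rewrite !gf.
Qed.
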